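(* Let $\mathcal T$ be the topograph of a binary quadratic form of discriminant $D$, and let $V$ be a vertex of $\mathcal T$ with adjacent region labels $r,s,t$ (all nonzero) and outgoing edge labels $e=r+t-s$ (the edge between the regions labelled $r$ and $t$), $f=r+s-t$ (between $r$ and $s$), $g=s+t-r$ (between $s$ and $t$), so that $D=-(ef+fg+ge)$. If $D<0$, then for the appropriate branches of $\arcsin$ and $\arctan$, \[ \arcsin\!\Big(\tfrac{e}{rt}\cdot\tfrac{\sqrt{-D}}{2}\Big)+\arcsin\!\Big(\tfrac{f}{rs}\cdot\tfrac{\sqrt{-D}}{2}\Big)+\arcsin\!\Big(\tfrac{g}{st}\cdot\tfrac{\sqrt{-D}}{2}\Big)=0,\qquad \arctan\!\Big(\tfrac{\sqrt{-D}}{e}\Big)+\arctan\!\Big(\tfrac{\sqrt{-D}}{f}\Big)+\arctan\!\Big(\tfrac{\sqrt{-D}}{g}\Big)=0. \] If $D>0$ and $|e|,|f|,|g|>\sqrt D$, then \[ \operatorname{arcsinh}\!\Big(\tfrac{e}{rt}\cdot\tfrac{\sqrt{D}}{2}\Big)+\operatorname{arcsinh}\!\Big(\tfrac{f}{rs}\cdot\tfrac{\sqrt{D}}{2}\Big)+\operatorname{arcsinh}\!\Big(\tfrac{g}{st}\cdot\tfrac{\sqrt{D}}{2}\Big)=0,\qquad \operatorname{arctanh}\!\Big(\tfrac{\sqrt{D}}{e}\Big)+\operatorname{arctanh}\!\Big(\tfrac{\sqrt{D}}{f}\Big)+\operatorname{arctanh}\!\Big(\tfrac{\sqrt{D}}{g}\Big)=0.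 \]
   Context: The topograph of a binary quadratic form $q$: a planar trivalent tree whose vertices are superbases $\{v_1,v_2,v_3\}$ of $\mathbb Z^2$ ($v_1+v_2+v_3=0$, $\{v_1,v_2\}$ a basis, up to overall sign), whose complementary regions correspond to pairs $\pm v$ of primitive vectors labelled $q(v)$. At a vertex with superbase $\{v_1,v_2,v_3\}$, the three adjacent regions have labels $q(v_1),q(v_2),q(v_3)$, and the label of an edge oriented outward from the vertex between regions labelled $x,y$, with third region at the vertex labelled $z$, is $x+y-z$. The discriminant $D$ of $q$ equals $-(ef+fg+ge)$ at every vertex. *)

(* Defs.v *)
From Stdlib Require Import Reals ZArith Lra Lia.
Open Scope R_scope.

Definition qform : Type := (Z * Z * Z)%type.

Definition qeval (q : qform) (v : Z * Z) : Z :=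
  let '(a, b, c) := q in let '(x, y) := v in (a*x*x + b*x*y + c*y*y)%Z.

Definition qdisc (q : qform) : Z :=
  let '(a, b, c) := q in (b*b - 4*a*c)%Z.

Definition vneg (v : Z * Z) : Z * Z := ((- fst v)%Z, (- snd v)%Z).
Definition vadd (v w : Z * Z) : Z * Z := ((fst v + fst w)%Z, (snd v + snd w)%Z).
Definition det2 (v w : Z * Z) : Z := (fst v * snd w - snd v * fst w)%Z.

(* {v1, v2, v3} is a superbase of Z^2: {v1,v2} a basis and v1+v2+v3 = 0.
   A vertex of the topograph is such a superbase (up to overall sign, which
   does not change the labels q(v_i)). *)
Definition superbase (v1 v2 v3 : Z * Z) : Prop :=
  (det2 v1 v2 = 1%Z \/ det2 v1 v2 = (-1)%Z) /\ v3 = vneg (vadd v1 v2).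

Definition arctanh (x : R) : R := / 2 * ln ((1 + x) / (1 - x)).

(* Main.v *)
Require Import Defs.
From Stdlib Require Import Reals ZArith Lra Lia Psatz.
Open Scope R_scope.

Lemma angle (E d : R) : 0 < d -> exists ph, 0 < sin ph /\ cos ph * d = E * sin ph /\
  sin ph ^ 2 * (E ^ 2 + d ^ 2) = d ^ 2.
Proof.
  intros Hd. exists (PI/2 - atan (E/d)). rewrite sin_shift, cos_shift.
  pose proof (atan_bound (E/d)) as [B1 B2].
  assert (Hc : 0 < cos (atan (E/d))) by (apply cos_gt_0; lra).
  pose proof (tan_atan (E/d)) as Ht. unfold tan in Ht.
  assert (Hs : sin (atan (E/d)) = E/d * cos (atan (E/d))).
  { rewrite <- Ht at 2. field. lra. }
  pose proof (sin2_cos2 (atan (E/d))) as H2. unfold Rsqr in H2.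
  split; [exact Hc|]. rewrite Hs. split. field. lra.
  rewrite Hs in H2.
  replace (cos (atan (E / d)) ^ 2 * (E ^ 2 + d ^ 2)) with
    ((E / d * cos (atan (E / d)) * (E / d * cos (atan (E / d))) + cos (atan (E / d)) * cos (atan (E / d))) * d^2) by (field; lra).
  rewrite H2. ring.
Qed.

Definition L (y : R) := ln ((1 + y) / (1 - y)).

Lemma arcsinh_L (y : R) : -1 < y < 1 -> arcsinh (2 * y / (1 - y^2)) = L y.
Proof.
  intros Hy. rewrite <- (arcsinh_sinh (L y)). f_equal.
  unfold sinh, L. rewrite exp_Ropp, exp_ln.
  - field. split; nra.
  - apply Rdiv_lt_0_compat; lra.
Qed.

Lemma neg_part (E F G Dr Rr Sr Tr : R) : 2*Rr = E+F -> 2*Sr = F+G -> 2*Tr = E+G ->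
  Dr = -(E*F+F*G+G*E) -> Dr < 0 ->
     (exists th1 th2 th3 : R,
        sin th1 = E / (Rr * Tr) * (sqrt (- Dr) / 2) /\
        sin th2 = F / (Rr * Sr) * (sqrt (- Dr) / 2) /\
        sin th3 = G / (Sr * Tr) * (sqrt (- Dr) / 2) /\
        th1 + th2 + th3 = 0) /\
     (exists ph1 ph2 ph3 : R,
        E * sin ph1 = sqrt (- Dr) * cos ph1 /\
        F * sin ph2 = sqrt (- Dr) * cos ph2 /\
        G * sin ph3 = sqrt (- Dr) * cos ph3 /\
        ph1 + ph2 + ph3 = 0).
Proof.
  intros hR hS hT hD hneg.
  set (d := sqrt (- Dr)).
  assert (Hd : 0 < d) by (apply sqrt_lt_R0; lra).
  assert (Hd2 : d * d = E*F+F*G+G*E) by (unfold d; rewrite sqrt_sqrt; lra).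
  clearbody d.
  assert (key : forall (X Y Z W: R) ph, 2*W = X+Y -> 2*Z = X+ (E+F+G - X - Y) ->
     d*d = X*Y + Y*(E+F+G-X-Y) + (E+F+G-X-Y)*X ->
     True -> cos ph * d = X * sin ph -> sin ph ^ 2 * (X^2 + d^2) = d^2 ->
     sin (2*ph) = X / (W * Z) * (d/2)).
  { intros X Y Z W ph h1 h2 h3 s0 c0 s2.
    assert (HWZ : 4 * (W*Z) = X^2 + d^2) by nra.
    assert (Hp : 0 < X^2 + d^2) by nra.
    assert (Hc : cos ph = X * sin ph / d). { apply (Rmult_eq_reg_r d). rewrite c0. field. lra. lra. }
    rewrite sin_2a, Hc.
    assert (HWZ' : W * Z = (X^2+d^2)/4) by lra.
    rewrite HWZ'.
    assert (Hs2 : sin ph ^ 2 = d^2 / (X^2+d^2)). { apply (Rmult_eq_reg_r (X^2+d^2)). rewrite s2. field. lra. lra. }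
    replace (2 * sin ph * (X * sin ph / d)) with (2 * X * (sin ph ^2) / d) by (field; lra).
    rewrite Hs2. field. lra. }
  destruct (angle E d Hd) as [p1 [s1 [c1 q1]]].
  destruct (angle F d Hd) as [p2 [s2 [c2 q2]]].
  set (p3 := - (p1 + p2)).
  assert (c3 : cos p3 * d = G * sin p3).
  { unfold p3. rewrite cos_neg, sin_neg, cos_plus, sin_plus.
    apply (Rmult_eq_reg_r (d*d)); [|nra].
    replace ((cos p1 * cos p2 - sin p1 * sin p2) * d * (d * d)) with
      ((cos p1 * d) * (cos p2 * d) * d - sin p1 * sin p2 * (d * d) * d) by ring.
    replace (G * - (sin p1 * cos p2 + cos p1 * sin p2) * (d * d)) with
      (- G * (sin p1 * (cos p2 * d) + (cos p1 * d) * sin p2) * d) by ring.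
    rewrite c1, c2, Hd2. ring. }
  assert (s3 : sin p3 ^ 2 * (G^2 + d^2) = d^2).
  { pose proof (sin2_cos2 p3) as H2. unfold Rsqr in H2.
    assert (Hc : cos p3 = G * sin p3 / d). { apply (Rmult_eq_reg_r d). rewrite c3. field. lra. lra. }
    rewrite Hc in H2.
    replace (sin p3 ^ 2 * (G ^ 2 + d ^ 2)) with
      ((sin p3 * sin p3 + G * sin p3 / d * (G * sin p3 / d)) * d^2) by (field; lra).
    rewrite H2. ring. }
  split.
  - exists (2*p1), (2*p2), (2*p3). split; [|split; [|split]].
    + apply (key E F Tr Rr p1); try lra; try nra; exact I.
    + apply (key F E Sr Rr p2); try lra; try nra; exact I.
    + apply (key G F Tr Sr p3); try lra; try nra.
      all: exact I.
    + unfold p3; ring.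
  - exists p1, p2, p3. split; [|split; [|split]]; try lra.
    unfold p3; ring.
Qed.

Lemma pos_part (E F G Dr Rr Sr Tr : R) : 2*Rr = E+F -> 2*Sr = F+G -> 2*Tr = E+G ->
  Dr = -(E*F+F*G+G*E) -> 0 < Dr ->
     sqrt Dr < Rabs E -> sqrt Dr < Rabs F -> sqrt Dr < Rabs G ->
     arcsinh (E / (Rr * Tr) * (sqrt Dr / 2)) +
     arcsinh (F / (Rr * Sr) * (sqrt Dr / 2)) +
     arcsinh (G / (Sr * Tr) * (sqrt Dr / 2)) = 0 /\
     arctanh (sqrt Dr / E) +
     arctanh (sqrt Dr / F) +
     arctanh (sqrt Dr / G) = 0.
Proof.
  intros hR hS hT hD hpos aE aF aG.
  set (d := sqrt Dr) in *.
  assert (Hd : 0 < d) by (apply sqrt_lt_R0; lra).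
  assert (Hd2 : d * d = Dr) by (unfold d; rewrite sqrt_sqrt; lra).
  clearbody d.
  assert (bnd : forall X, d < Rabs X -> -1 < d / X < 1 /\ X <> 0 /\ d*d < X*X).
  { intros X hX. destruct (Rcase_abs X) as [h|h]; [rewrite Rabs_left in hX by lra|rewrite Rabs_right in hX by lra].
    - split; [split|split; [lra|nra]].
      + apply (Rmult_lt_reg_r (-X)); [lra|]. replace (d / X * - X) with (-d) by (field; lra). lra.
      + apply (Rmult_lt_reg_r (-X)); [lra|]. replace (d / X * - X) with (-d) by (field; lra). lra.
    - split; [split|split; [lra|nra]].
      + apply (Rmult_lt_reg_r X); [lra|]. replace (d / X * X) with d by (field; lra). lra.
      + apply (Rmult_lt_reg_r X); [lra|]. replace (d / X * X) with d by (field; lra). lra. }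
  destruct (bnd E aE) as [yE [nE qE]]. destruct (bnd F aF) as [yF [nF qF]]. destruct (bnd G aG) as [yG [nG qG]].
  assert (u : forall X, -1 < d/X < 1 -> X <> 0 -> 0 < (1 + d/X)/(1 - d/X)).
  { intros X h _. apply Rdiv_lt_0_compat; lra. }
  assert (sumL : L (d/E) + L (d/F) + L (d/G) = 0).
  { unfold L. rewrite <- ln_mult, <- ln_mult by (auto; apply Rmult_lt_0_compat; auto).
    rewrite <- ln_1. f_equal.
    assert (HE : (1 + d/E)/(1 - d/E) = (E+d)/(E-d)) by (field; split; nra).
    assert (HF : (1 + d/F)/(1 - d/F) = (F+d)/(F-d)) by (field; split; nra).
    assert (HG : (1 + d/G)/(1 - d/G) = (G+d)/(G-d)) by (field; split; nra).
    rewrite HE, HF, HG.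
    assert (Hn : (E-d)*(F-d)*(G-d) <> 0).
    { repeat apply Rmult_integral_contrapositive_currified; nra. }
    assert (Heq : (E+d)*(F+d)*(G+d) = (E-d)*(F-d)*(G-d)).
    { replace ((E+d)*(F+d)*(G+d)) with ((E-d)*(F-d)*(G-d) + 2*d*(E*F+F*G+G*E) + 2*d*(d*d)) by ring.
      rewrite Hd2, hD. ring. }
    replace ((E+d)/(E-d)*((F+d)/(F-d))*((G+d)/(G-d))) with ((E+d)*(F+d)*(G+d)/((E-d)*(F-d)*(G-d))).
    2:{ field. split; [|split]; nra. }
    rewrite Heq. field. split; [|split]; nra. }
  assert (key : forall X W Z, 4*(W*Z) = X*X - d*d -> -1 < d/X < 1 -> X <> 0 -> d*d < X*X ->
     arcsinh (X / (W * Z) * (d / 2)) = L (d/X)).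
  { intros X W Z h1 h2 h3 h4. rewrite <- arcsinh_L by exact h2. f_equal.
    replace (W*Z) with ((X*X - d*d)/4) by lra. field. split; [lra|nra]. }
  split.
  - rewrite (key E Rr Tr), (key F Rr Sr), (key G Sr Tr); auto; nra.
  - unfold arctanh. fold (L (d/E)). fold (L (d/F)). fold (L (d/G)). lra.
Qed.
Theorem lemma1 (q : qform) (v1 v2 v3 : Z * Z) :
  superbase v1 v2 v3 ->
  let r := qeval q v1 in
  let s := qeval q v2 in
  let t := qeval q v3 in
  let e := (r + t - s)%Z in
  let f := (r + s - t)%Z in
  let g := (s + t - r)%Z in
  let D := qdisc q in
  r <> 0%Z -> s <> 0%Z -> t <> 0%Z ->
  D = (- (e*f + f*g + g*e))%Z /\
  ((D < 0)%Z ->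
     (exists th1 th2 th3 : R,
        sin th1 = IZR e / (IZR r * IZR t) * (sqrt (- IZR D) / 2) /\
        sin th2 = IZR f / (IZR r * IZR s) * (sqrt (- IZR D) / 2) /\
        sin th3 = IZR g / (IZR s * IZR t) * (sqrt (- IZR D) / 2) /\
        th1 + th2 + th3 = 0) /\
     (exists ph1 ph2 ph3 : R,
        (* "tan ph = sqrt(-D)/e", written as e sin ph = sqrt(-D) cos ph *)
        IZR e * sin ph1 = sqrt (- IZR D) * cos ph1 /\
        IZR f * sin ph2 = sqrt (- IZR D) * cos ph2 /\
        IZR g * sin ph3 = sqrt (- IZR D) * cos ph3 /\
        ph1 + ph2 + ph3 = 0)) /\
  ((0 < D)%Z ->
     sqrt (IZR D) < Rabs (IZR e) ->
     sqrt (IZR D) < Rabs (IZR f) ->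
     sqrt (IZR D) < Rabs (IZR g) ->
     arcsinh (IZR e / (IZR r * IZR t) * (sqrt (IZR D) / 2)) +
     arcsinh (IZR f / (IZR r * IZR s) * (sqrt (IZR D) / 2)) +
     arcsinh (IZR g / (IZR s * IZR t) * (sqrt (IZR D) / 2)) = 0 /\
     arctanh (sqrt (IZR D) / IZR e) +
     arctanh (sqrt (IZR D) / IZR f) +
     arctanh (sqrt (IZR D) / IZR g) = 0).
Proof.
  intros Hsb r s t e f g D Hr Hs Ht.
  assert (HD : D = (- (e*f + f*g + g*e))%Z).
  { destruct Hsb as [Hdet Hv3]. subst D g f e t s r. subst v3.
    destruct q as [[a b] c]. destruct v1 as [x1 y1], v2 as [x2 y2].
    unfold det2, vneg, vadd, qeval, qdisc in *. cbn [fst snd] in *.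
    assert (Hsq : ((x1 * y2 - y1 * x2) * (x1 * y2 - y1 * x2) = 1)%Z) by (destruct Hdet as [H|H]; rewrite H; reflexivity).
    transitivity ((x1 * y2 - y1 * x2) * (x1 * y2 - y1 * x2) * (b * b - 4 * a * c))%Z.
    - rewrite Hsq. ring.
    - ring. }
  assert (h1 : (2 * r = e + f)%Z) by (unfold e, f; ring).
  assert (h2 : (2 * s = f + g)%Z) by (unfold f, g; ring).
  assert (h3 : (2 * t = e + g)%Z) by (unfold e, g; ring).
  clearbody r s t e f g D.
  apply (f_equal IZR) in h1, h2, h3, HD.
  rewrite !mult_IZR, !plus_IZR in h1, h2, h3.
  rewrite opp_IZR, !plus_IZR, !mult_IZR in HD.
  split; [|split].
  - apply eq_IZR. rewrite HD, opp_IZR, !plus_IZR, !mult_IZR. reflexivity.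
  - intros Hn. apply IZR_lt in Hn.
    apply neg_part; auto; try lra; now apply not_0_IZR.
  - intros Hp. apply IZR_lt in Hp.
    apply pos_part; auto; try lra.
Qed.
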